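(* Let $X$ be a strictly convex $C^{(3)}$ curve in the plane $\mathbb{R}^2$, and let $P\in X$. For sufficiently small $h>0$, let $T_P(h)$ and $U_P(h)$ be the areas of the triangles $\triangle AA_1A_2$ and $\triangle BB_1B_2$ associated with $P$ and $h$ as described in the context. Then $$\lim_{h\to 0^+}\frac{T_P(h)}{h\sqrt{h}}=\frac{\sqrt{2}}{\sqrt{\kappa(P)}}\qquad\text{and}\qquad \lim_{h\to 0^+}\frac{U_P(h)}{h\sqrt{h}}=\frac{\sqrt{2}}{2\sqrt{\kappa(P)}},$$ where $\kappa(P)$ is the curvature of $X$ at $P$ with respect to the unit normal $N$ pointing to the convex side.
   Context: A regular plane curve $X$ defined on an open interval is convex if for every point of $X$ the trace of $X$ lies entirely in one closed half-plane determined by the tangent line at that point. A simple convex curve $X$ is called strictly convex if it is of class $C^{(3)}$ and has positive curvature $\kappa$ with respect to the unit normal $N$ pointing to the convex side, i.e. $\kappa(s)=\langle X''(s),N(X(s))\rangle>0$ for an arclength parametrization $X(s)$. For $P=A\in X$ and sufficiently small $h>0$, let $m$ be the line through $P+hN(P)$ parallel to the tangent line $\ell$ of $X$ at $P$, and let $A_1,A_2$ be the two points where $m$ meets $X$. Let $\ell_1,\ell_2$ be the tangent lines of $X$ at $A_1,A_2$, and let $B=\ell_1\cap\ell_2$, $B_1=\ell\cap\ell_1$, $B_2=\ell\cap\ell_2$. Define $T_P(h)=|\triangle AA_1A_2|$ and $U_P(h)=|\triangle BB_1B_2|$ (areas). *)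

(* Defs.v *)
From Stdlib Require Import Reals Lra.
From Coquelicot Require Import Coquelicot.
Open Scope R_scope.

(* A plane curve is given by its coordinate functions x, y : R -> R,
   defined on the open interval (a, b), with a, b : Rbar (possibly infinite). *)
Definition in_I (a b : Rbar) (s : R) : Prop := Rbar_lt a s /\ Rbar_lt s b.

Definition pt := (R * R)%type.
Definition dot (u v : pt) : R := fst u * fst v + snd u * snd v.
Definition det2 (u v : pt) : R := fst u * snd v - snd u * fst v.
Definition psub (u v : pt) : pt := (fst u - fst v, snd u - snd v).

Definition Xpt (x y : R -> R) (s : R) : pt := (x s, y s).
Definition Xd (x y : R -> R) (s : R) : pt := (Derive x s, Derive y s).
Definition Xdd (x y : R -> R) (s : R) : pt := (Derive_n x 2 s, Derive_n y 2 s).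

Definition tri_area (P Q S : pt) : R := Rabs (det2 (psub Q P) (psub S P)) / 2.

(* Intersection point of the line through P with direction u and the line
   through Q with direction v (meaningful when det2 u v <> 0):
   P + t u with t = det2 (Q - P) v / det2 u v. *)
Definition line_inter (P u Q v : pt) : pt :=
  let t := det2 (psub Q P) v / det2 u v in
  (fst P + t * fst u, snd P + t * snd u).

Definition C3_on (a b : Rbar) (f : R -> R) : Prop :=
  (forall k s, (k <= 3)%nat -> in_I a b s -> ex_derive_n f k s) /\
  (forall s, in_I a b s -> continuous (Derive_n f 3) s).

Definition regular_arclength (a b : Rbar) (x y : R -> R) : Prop :=
  forall s, in_I a b s -> (Derive x s) ^ 2 + (Derive y s) ^ 2 = 1.

Definition simple_curve (a b : Rbar) (x y : R -> R) : Prop :=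
  forall s t, in_I a b s -> in_I a b t -> s <> t -> Xpt x y s <> Xpt x y t.

(* n is a unit normal at s (one of the two unit vectors orthogonal to the
   unit tangent) such that the whole trace lies in the closed half-plane
   determined by the tangent line at X(s) on the side of n:
   n is the unit normal pointing to the convex side. *)
Definition convex_side_normal (a b : Rbar) (x y : R -> R) (s : R) (n : pt) : Prop :=
  (n = (- Derive y s, Derive x s) \/ n = (Derive y s, - Derive x s)) /\
  (forall t, in_I a b t -> 0 <= dot (psub (Xpt x y t) (Xpt x y s)) n).

Definition convex_curve (a b : Rbar) (x y : R -> R) : Prop :=
  forall s, in_I a b s -> exists n, convex_side_normal a b x y s n.

Definition strictly_convex (a b : Rbar) (x y : R -> R) : Prop :=
  Rbar_lt a b /\
  regular_arclength a b x y /\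
  C3_on a b x /\ C3_on a b y /\
  simple_curve a b x y /\
  convex_curve a b x y /\
  (forall s n, in_I a b s -> convex_side_normal a b x y s n ->
     0 < dot (Xdd x y s) n).

(* X(s) lies on the line m through P + h N parallel to the tangent line at P = X(p) *)
Definition on_m (x y : R -> R) (p : R) (N : pt) (h s : R) : Prop :=
  dot (psub (Xpt x y s) (Xpt x y p)) N = h.

(* T_P(h) for the intersection parameters s1, s2 (A1 = X(s1), A2 = X(s2)) *)
Definition T_area (x y : R -> R) (p s1 s2 : R) : R :=
  tri_area (Xpt x y p) (Xpt x y s1) (Xpt x y s2).

(* U_P(h): B = l1 ∩ l2, B1 = l ∩ l1, B2 = l ∩ l2 *)
Definition U_area (x y : R -> R) (p s1 s2 : R) : R :=
  let B  := line_inter (Xpt x y s1) (Xd x y s1) (Xpt x y s2) (Xd x y s2) in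
  let B1 := line_inter (Xpt x y p) (Xd x y p) (Xpt x y s1) (Xd x y s1) in
  let B2 := line_inter (Xpt x y p) (Xd x y p) (Xpt x y s2) (Xd x y s2) in
  tri_area B B1 B2.

(* Main.v *)
From Stdlib Require Import Reals Lra.
From Coquelicot Require Import Coquelicot.
Require Import Defs.
Open Scope R_scope.

Section L.
Context {T : Type} {F : (T -> Prop) -> Prop} {FF : Filter F}.

Lemma lim_plus (f g : T -> R) a b :
  filterlim f F (locally a) -> filterlim g F (locally b) ->
  filterlim (fun t => f t + g t) F (locally (a + b)).
Proof.
  intros Hf Hg. eapply filterlim_comp_2; [exact Hf|exact Hg|].
  apply (filterlim_Rbar_plus (Finite a) (Finite b) (Finite (a+b))). reflexivity.
Qed.

Lemma lim_mult (f g : T -> R) a b :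
  filterlim f F (locally a) -> filterlim g F (locally b) ->
  filterlim (fun t => f t * g t) F (locally (a * b)).
Proof.
  intros Hf Hg. eapply filterlim_comp_2; [exact Hf|exact Hg|].
  apply (filterlim_Rbar_mult (Finite a) (Finite b) (Finite (a*b))). reflexivity.
Qed.

Lemma lim_const (a : R) : filterlim (fun _ : T => a) F (locally a).
Proof. apply filterlim_const. Qed.

Lemma lim_opp (f : T -> R) a :
  filterlim f F (locally a) -> filterlim (fun t => - f t) F (locally (- a)).
Proof.
  intros Hf. replace (-a) with ((-1) * a) by ring.
  eapply filterlim_ext; [|apply lim_mult; [apply lim_const|exact Hf]].
  intros; simpl; ring.
Qed.

Lemma lim_minus (f g : T -> R) a b :
  filterlim f F (locally a) -> filterlim g F (locally b) ->
  filterlim (fun t => f t - g t) F (locally (a - b)).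
Proof. intros; apply lim_plus; auto; apply lim_opp; auto. Qed.

Lemma lim_inv (f : T -> R) a : a <> 0 ->
  filterlim f F (locally a) -> filterlim (fun t => / f t) F (locally (/ a)).
Proof.
  intros Ha Hf. eapply filterlim_comp; [exact Hf|].
  apply (filterlim_Rbar_inv (Finite a)). intro E; apply Ha; now injection E.
Qed.

Lemma lim_div (f g : T -> R) a b : b <> 0 ->
  filterlim f F (locally a) -> filterlim g F (locally b) ->
  filterlim (fun t => f t / g t) F (locally (a / b)).
Proof. intros; apply lim_mult; auto; apply lim_inv; auto. Qed.

Lemma lim_abs (f : T -> R) a :
  filterlim f F (locally a) -> filterlim (fun t => Rabs (f t)) F (locally (Rabs a)).
Proof.
  intros Hf. eapply filterlim_comp; [exact Hf|].
  apply (filterlim_Rabs (Finite a)).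
Qed.

Lemma lim_sqrt (f : T -> R) a : 0 < a ->
  filterlim f F (locally a) -> filterlim (fun t => sqrt (f t)) F (locally (sqrt a)).
Proof.
  intros Ha Hf. eapply filterlim_comp; [exact Hf|].
  apply continuity_pt_filterlim. apply continuity_pt_sqrt. lra.
Qed.
End L.

Definition crd (O T N : pt) (Z : pt) : pt := (dot (psub Z O) T, dot (psub Z O) N).
Definition crd0 (T N : pt) (v : pt) : pt := (dot v T, dot v N).

Definition unitv (T : pt) := fst T ^ 2 + snd T ^ 2 = 1.
Definition nrel (T N : pt) := N = (- snd T, fst T) \/ N = (snd T, - fst T).

Lemma det_crd T N : unitv T -> nrel T N -> exists sg, (sg = 1 \/ sg = -1) /\
  forall v w, det2 (crd0 T N v) (crd0 T N w) = sg * det2 v w.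
Proof.
  destruct T as [t1 t2]; unfold unitv, nrel, crd0, det2, dot; cbn [fst snd]; intros HT [HN|HN]; subst N; cbn [fst snd].
  - exists 1; split; [left; auto|]. intros [v1 v2] [w1 w2]; cbn [fst snd].
    transitivity ((t1^2+t2^2) * (v1*w2 - v2*w1)); [ring|]. rewrite HT; ring.
  - exists (-1); split; [right; auto|]. intros [v1 v2] [w1 w2]; cbn [fst snd].
    transitivity (-(t1^2+t2^2) * (v1*w2 - v2*w1)); [ring|]. rewrite HT; ring.
Qed.

Lemma dot_decomp T N v n : unitv T -> nrel T N ->
  dot v n = dot v T * dot n T + dot v N * dot n N.
Proof.
  destruct T as [t1 t2]; destruct v as [v1 v2]; destruct n as [n1 n2];
  unfold unitv, nrel, dot; cbn [fst snd]; intros HT [HN|HN]; subst N; cbn [fst snd];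
  (transitivity ((t1^2+t2^2) * (v1*n1+v2*n2)); [rewrite HT; ring| ring]).
Qed.

Lemma crd_inj T N v : unitv T -> nrel T N -> dot v T = 0 -> dot v N = 0 -> v = (0,0).
Proof.
  intros HT HN H1 H2.
  destruct v as [v1 v2].
  assert (E1 := dot_decomp T N (v1,v2) (1,0) HT HN).
  assert (E2 := dot_decomp T N (v1,v2) (0,1) HT HN).
  rewrite H1, H2 in E1, E2. unfold dot in E1, E2; simpl in E1, E2.
  f_equal; lra.
Qed.

Lemma line_inter_crd T N O P u Q v : unitv T -> nrel T N -> det2 u v <> 0 ->
  crd O T N (line_inter P u Q v) =
  line_inter (crd O T N P) (crd0 T N u) (crd O T N Q) (crd0 T N v).
Proof.
  intros HT HN Hd. destruct (det_crd T N HT HN) as [sg [Hsg Hdet]].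
  assert (Hq : psub (crd O T N Q) (crd O T N P) = crd0 T N (psub Q P)).
  { destruct O, P, Q, T, N; unfold crd, crd0, psub, dot; simpl; f_equal; ring. }
  unfold line_inter at 2. rewrite Hq, !Hdet.
  replace (sg * det2 (psub Q P) v / (sg * det2 u v)) with (det2 (psub Q P) v / det2 u v)
    by (field; split; auto; destruct Hsg; lra).
  set (t := det2 (psub Q P) v / det2 u v).
  unfold line_inter; fold t.
  destruct O, P, u, T, N; unfold crd, crd0, psub, dot; simpl; f_equal; ring.
Qed.

Lemma tri_area_crd T N O A B C : unitv T -> nrel T N ->
  tri_area A B C = tri_area (crd O T N A) (crd O T N B) (crd O T N C).
Proof.
  intros HT HN. destruct (det_crd T N HT HN) as [sg [Hsg Hdet]].
  unfold tri_area.
  assert (H1 : forall X Y, psub (crd O T N X) (crd O T N Y) = crd0 T N (psub X Y)).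
  { intros [] []; destruct O, T, N; unfold crd, crd0, psub, dot; simpl; f_equal; ring. }
  rewrite !H1, Hdet, Rabs_mult. destruct Hsg; subst sg.
  - rewrite (Rabs_pos_eq 1) by lra; lra.
  - rewrite (Rabs_left (-1)) by lra; lra.
Qed.

Lemma ratio_lim {T} {F : (T -> Prop) -> Prop} {FF : Filter F}
  (phi : R -> R) x0 l (a : T -> R) :
  derivable_pt_lim phi x0 l -> filterlim a F (locally x0) ->
  F (fun t => a t <> x0) ->
  filterlim (fun t => (phi (a t) - phi x0) / (a t - x0)) F (locally l).
Proof.
  intros Hd Ha Hne. apply filterlim_locally. intros eps.
  destruct (Hd eps (cond_pos eps)) as [del Hdel].
  assert (Hb : F (fun t => ball x0 del (a t))).
  { apply (Ha (ball x0 del)). apply locally_ball. }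
  generalize (filter_and _ _ Hb Hne). apply filter_imp. intros t [Hbt Hn].
  change (Rabs ((phi (a t) - phi x0) / (a t - x0) - l) < eps).
  assert (E : a t = x0 + (a t - x0)) by ring.
  assert (Hh : a t - x0 <> 0) by lra.
  assert (Hlt : Rabs (a t - x0) < del) by exact Hbt.
  specialize (Hdel _ Hh Hlt). rewrite <- E in Hdel. exact Hdel.
Qed.

Lemma quad_bound (phi dphi : R -> R) (p r k e : R) :
  (forall s, Rabs (s - p) < r -> is_derive phi s (dphi s)) ->
  phi p = 0 -> 0 <= e ->
  (forall s, Rabs (s - p) < r -> Rabs (dphi s - k * (s - p)) <= e * Rabs (s - p)) ->
  forall s, Rabs (s - p) < r -> Rabs (phi s - k * (s - p) ^ 2 / 2) <= e * (s - p) ^ 2.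
Proof.
  intros Hder H0 He Hb s Hs.
  set (psi := fun t => phi t - k * (t - p) ^ 2 / 2).
  set (dpsi := fun t => dphi t - k * (t - p)).
  assert (Hin : forall c, Rmin p s <= c <= Rmax p s -> Rabs (c - p) <= Rabs (s - p)).
  { intros c Hc. unfold Rmin, Rmax in Hc. destruct (Rle_dec p s).
    - rewrite !Rabs_pos_eq by lra. lra.
    - rewrite !Rabs_left1 by lra. lra. }
  assert (HD : forall c, Rabs (c - p) < r -> is_derive psi c (dpsi c)).
  { intros c Hc. unfold psi, dpsi.
    assert (Hq : is_derive (fun t => k * (t - p) ^ 2 / 2) c (k * (c - p))).
    { auto_derive; [auto| field]. }
    apply (is_derive_minus phi (fun t => k * (t - p) ^ 2 / 2)); auto. }
  destruct (MVT_gen psi p s dpsi) as [c [Hc Heq]].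
  - intros c Hc. apply HD. assert (Hc' : Rmin p s <= c <= Rmax p s) by lra.
    specialize (Hin c Hc'). lra.
  - intros c Hc. specialize (Hin c Hc). apply continuity_pt_filterlim.
    assert (Hc3 : Rabs (c - p) < r) by lra.
    exact (ex_derive_continuous psi c (ex_intro _ _ (HD c Hc3))).
  - 
    change (Rabs (psi s) <= e * (s - p) ^ 2).
    replace (psi s) with (dpsi c * (s - p)) by (rewrite <- Heq; unfold psi; rewrite H0; field).
    specialize (Hin c Hc).
    rewrite Rabs_mult. 
    assert (Hdc : Rabs (dpsi c) <= e * Rabs (s - p)).
    { unfold dpsi. eapply Rle_trans; [apply Hb; lra|]. apply Rmult_le_compat_l; auto. }
    replace ((s - p) ^ 2) with (Rabs (s - p) * Rabs (s - p)).
    + assert (0 <= Rabs (s - p)) by apply Rabs_pos. nra.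
    + rewrite <- Rabs_mult. rewrite Rabs_pos_eq; [ring|]. apply Rle_0_sqr.
Qed.

Ltac rring := match goal with |- ?a = ?b => change (@eq R a b) end; ring.
Ltac rfield := match goal with |- ?a = ?b => change (@eq R a b) end; field.

Lemma der_dot (x y : R -> R) (P0 V : pt) (s : R) : ex_derive x s -> ex_derive y s ->
  is_derive (fun t => dot (psub (Xpt x y t) P0) V) s (dot (Xd x y s) V).
Proof.
  intros Hx Hy. unfold dot, psub, Xpt, Xd; simpl.
  auto_derive; [tauto | rewrite !Rmult_1_l; reflexivity].
Qed.

Lemma der_dot2 (x y : R -> R) (V : pt) (s : R) : ex_derive (Derive x) s -> ex_derive (Derive y) s ->
  is_derive (fun t => dot (Xd x y t) V) s (dot (Xdd x y s) V).
Proof.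
  intros Hx Hy. unfold dot, Xd, Xdd; simpl.
  auto_derive; [tauto | rewrite !Rmult_1_l; reflexivity].
Qed.

Lemma Rabs_le_inv (u e : R) : Rabs u <= e -> - e <= u <= e.
Proof. unfold Rabs; destruct (Rcase_abs u); intros; lra. Qed.

Lemma lim_div' {T} {F : (T -> Prop) -> Prop} {FF : Filter F} (f g : T -> R) a b :
  filterlim f F (locally a) -> filterlim g F (locally b) -> b <> 0 ->
  filterlim (fun t => f t / g t) F (locally (a / b)).
Proof. intros; apply lim_div; auto. Qed.

Lemma lim_inv' {T} {F : (T -> Prop) -> Prop} {FF : Filter F} (f : T -> R) a :
  filterlim f F (locally a) -> a <> 0 -> filterlim (fun t => / f t) F (locally (/ a)).
Proof. intros; apply lim_inv; auto. Qed.

Ltac lim_tac := first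
 [ eassumption
 | apply lim_const
 | eapply lim_abs; lim_tac
 | eapply lim_div'; [lim_tac|lim_tac|]
 | eapply lim_inv'; [lim_tac|]
 | eapply lim_minus; [lim_tac|lim_tac]
 | eapply lim_plus; [lim_tac|lim_tac]
 | eapply lim_mult; [lim_tac|lim_tac]
 | eapply lim_opp; lim_tac ].

Lemma ev_pos : at_right 0 (fun h => 0 < h).
Proof. exists (mkposreal 1 Rlt_0_1). intros y _ Hy. exact Hy. Qed.

Lemma ev_small c : 0 < c -> at_right 0 (fun h => h < c).
Proof.
  intros Hc. exists (mkposreal c Hc). intros y Hy _.
  change (Rabs (y - 0) < c) in Hy. apply Rabs_def2 in Hy. lra.
Qed.

Lemma ev_neq {T} {F : (T -> Prop) -> Prop} {FF : Filter F} (f : T -> R) l :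
  filterlim f F (locally l) -> l <> 0 -> F (fun t => f t <> 0).
Proof.
  intros H Hl. assert (Hp : 0 < Rabs l) by (apply Rabs_pos_lt; auto).
  generalize (proj1 (filterlim_locally f l) H (mkposreal _ Hp)). apply filter_imp.
  intros t Ht E. change (Rabs (f t - l) < Rabs l) in Ht. rewrite E in Ht.
  replace (0 - l) with (- l) in Ht by ring. rewrite Rabs_Ropp in Ht. lra.
Qed.

Lemma w_eq s u : 0 < s -> 0 < u -> sqrt (/ ((s * s) / u ^ 2)) = u / s.
Proof.
  intros. replace (/ ((s * s) / u ^ 2)) with ((u / s) ^ 2) by (field; lra).
  apply sqrt_pow2. apply Rlt_le, Rdiv_lt_0_compat; auto.
Qed.

Lemma w_eq' s u : 0 < s -> u < 0 -> - sqrt (/ ((s * s) / u ^ 2)) = u / s.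
Proof.
  intros. replace (u ^ 2) with ((- u) ^ 2) by ring. rewrite w_eq by lra. field; lra.
Qed.

Lemma T_alg G1 G2 hh sh g1 g2 w1 w2 : 0 < sh -> hh = sh * sh ->
  G1 = g1 * w1 * sh -> G2 = g2 * w2 * sh ->
  tri_area (0, 0) (G1, hh) (G2, hh) / (hh * sh) = Rabs (g2 * w2 - g1 * w1) / 2.
Proof.
  intros Hs E0 E1 E2; subst. unfold tri_area, det2, psub; simpl.
  match goal with |- Rabs ?E / 2 / _ = _ =>
    replace E with ((g1 * w1 - g2 * w2) * (sh * sh * sh)) by ring end.
  rewrite Rabs_mult, (Rabs_pos_eq (sh * sh * sh)) by (apply Rlt_le; repeat apply Rmult_lt_0_compat; auto).
  rewrite Rabs_minus_sym. field; lra.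
Qed.

Lemma U_alg G1 G2 B1 B2 hh sh g1 g2 w1 w2 al1 al2 b1 b2 : 0 < sh -> hh = sh * sh ->
  G1 = g1 * w1 * sh -> G2 = g2 * w2 * sh -> B1 = b1 * w1 * sh -> B2 = b2 * w2 * sh ->
  w1 <> 0 -> w2 <> 0 -> b1 <> 0 -> b2 <> 0 -> al1 * b2 * w2 - b1 * w1 * al2 <> 0 ->
  tri_area (line_inter (G1, hh) (al1, B1) (G2, hh) (al2, B2))
           (line_inter (0, 0) (1, 0) (G1, hh) (al1, B1))
           (line_inter (0, 0) (1, 0) (G2, hh) (al2, B2)) / (hh * sh)
  = Rabs ((g2 * w2 - al2 / (b2 * w2)) - (g1 * w1 - al1 / (b1 * w1))) *
    Rabs (1 + (g2 * w2 - g1 * w1) * b1 * b2 * w1 * w2 / (al1 * b2 * w2 - b1 * w1 * al2)) / 2.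
Proof.
  intros Hs E0 E1 E2 E3 E4 Hw1 Hw2 Hb1 Hb2 HD; subst.
  unfold tri_area, line_inter, det2, psub; simpl.
  match goal with |- Rabs ?E / 2 / _ = _ =>
    replace E with (((g2 * w2 - al2 / (b2 * w2)) - (g1 * w1 - al1 / (b1 * w1))) *
    (1 + (g2 * w2 - g1 * w1) * b1 * b2 * w1 * w2 / (al1 * b2 * w2 - b1 * w1 * al2)) * (sh * sh * sh)) end.
  - rewrite Rabs_mult, Rabs_mult, (Rabs_pos_eq (sh * sh * sh)) by (apply Rlt_le; repeat apply Rmult_lt_0_compat; auto).
    field; lra.
  - field. repeat split; auto; try lra.
    replace (al1 * (b2 * w2 * sh) - b1 * w1 * sh * al2) with ((al1 * b2 * w2 - b1 * w1 * al2) * sh) by ring.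
    apply Rmult_integral_contrapositive_currified; auto; lra.
Qed.

Lemma psub_dot (A B P V : pt) : dot (psub A B) V = dot (psub A P) V - dot (psub B P) V.
Proof. destruct A, B, P, V; unfold dot, psub; simpl; ring. Qed.

Lemma Rbar_left (a : Rbar) (p : R) : Rbar_lt a p -> exists r, 0 < r /\ forall s, p - r < s -> Rbar_lt a s.
Proof.
  destruct a as [a0| |]; simpl; intros H.
  - exists (p - a0); split; [lra|]. intros; lra.
  - contradiction.
  - exists 1; split; [lra|]. auto.
Qed.

Lemma Rbar_right (b : Rbar) (p : R) : Rbar_lt p b -> exists r, 0 < r /\ forall s, s < p + r -> Rbar_lt s b.
Proof.
  destruct b as [b0| |]; simpl; intros H.
  - exists (b0 - p); split; [lra|]. intros; lra.
  - exists 1; split; [lra|]. auto.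
  - contradiction.
Qed.

Section Curve.
Variables (a b : Rbar) (x y : R -> R) (p : R) (N : pt).
Hypothesis Hdx : forall s, in_I a b s -> ex_derive x s.
Hypothesis Hdy : forall s, in_I a b s -> ex_derive y s.
Hypothesis Hreg : regular_arclength a b x y.
Hypothesis Hsimp : simple_curve a b x y.
Hypothesis Hconv : convex_curve a b x y.
Hypothesis Hp : in_I a b p.
Hypothesis HN : convex_side_normal a b x y p N.
Hypothesis Hx2 : ex_derive (Derive x) p.
Hypothesis Hy2 : ex_derive (Derive y) p.
Hypothesis Hk : 0 < dot (Xdd x y p) N.

Definition Tv := Xd x y p.
Definition kap := dot (Xdd x y p) N.
Definition Ff s := dot (psub (Xpt x y s) (Xpt x y p)) N.
Definition Gf s := dot (psub (Xpt x y s) (Xpt x y p)) Tv.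
Definition dF s := dot (Xd x y s) N.
Definition dG s := dot (Xd x y s) Tv.

Lemma HTu : unitv Tv.
Proof. exact (Hreg p Hp). Qed.
Lemma HTN : nrel Tv N.
Proof. exact (proj1 HN). Qed.

Lemma dotTN : dot Tv N = 0.
Proof. destruct HTN as [E|E]; rewrite E; unfold dot; simpl; ring. Qed.
Lemma dotTT : dot Tv Tv = 1.
Proof. generalize HTu; unfold unitv, dot; intros H; rewrite <- H; ring. Qed.
Lemma dotNN : dot N N = 1.
Proof. generalize HTu; unfold unitv, dot; intros H; destruct HTN as [E|E]; rewrite E; cbn [fst snd]; rewrite <- H; ring. Qed.

Lemma nbhd : exists r, 0 < r /\ forall s, Rabs (s - p) < r -> in_I a b s.
Proof.
  destruct Hp as [H1 H2].
  destruct (Rbar_left a p H1) as [r1 [Hr1 E1]].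
  destruct (Rbar_right b p H2) as [r2 [Hr2 E2]].
  exists (Rmin r1 r2); split; [apply Rmin_pos; auto|].
  intros s Hs. assert (Rmin r1 r2 <= r1) by apply Rmin_l. assert (Rmin r1 r2 <= r2) by apply Rmin_r.
  apply Rabs_def2 in Hs. split; [apply E1|apply E2]; lra.
Qed.

Lemma Ff_p : Ff p = 0.
Proof. unfold Ff, dot, psub; simpl; ring. Qed.
Lemma Gf_p : Gf p = 0.
Proof. unfold Gf, dot, psub; simpl; ring. Qed.
Lemma dF_p : dF p = 0.
Proof. exact dotTN. Qed.
Lemma dG_p : dG p = 1.
Proof. exact dotTT. Qed.

Lemma Ff_der s : in_I a b s -> is_derive Ff s (dF s).
Proof. intros; apply der_dot; auto. Qed.

Lemma Ff_cont s : in_I a b s -> continuity_pt Ff s.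
Proof.
  intros Hs. apply continuity_pt_filterlim.
  exact (ex_derive_continuous Ff s (ex_intro _ _ (Ff_der s Hs))).
Qed.

Lemma dF_lim : derivable_pt_lim dF p kap.
Proof. apply is_derive_Reals. apply der_dot2; auto. Qed.

Lemma Gf_lim : derivable_pt_lim Gf p 1.
Proof. apply is_derive_Reals. rewrite <- dG_p. apply der_dot; apply Hdx || apply Hdy; auto. Qed.

Lemma dG_cont : filterlim dG (locally p) (locally 1).
Proof.
  rewrite <- dG_p.
  exact (ex_derive_continuous dG p (ex_intro _ _ (der_dot2 x y Tv p Hx2 Hy2))).
Qed.

Lemma Ff_ge0 s : in_I a b s -> 0 <= Ff s.
Proof. intros Hs; exact (proj2 HN s Hs). Qed.

Lemma local_quad e : 0 < e -> exists r, 0 < r /\ (forall s, Rabs (s - p) < r -> in_I a b s) /\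
  forall s, Rabs (s - p) < r -> Rabs (Ff s - kap * (s - p) ^ 2 / 2) <= e * (s - p) ^ 2.
Proof.
  intros He. destruct nbhd as [r1 [Hr1 Hn]].
  destruct (dF_lim e He) as [del Hdel].
  exists (Rmin r1 del). 
  assert (Rmin r1 del <= r1) by apply Rmin_l. assert (Rmin r1 del <= del) by apply Rmin_r.
  split; [apply Rmin_pos; auto; apply cond_pos|]. split.
  - intros s Hs; apply Hn; lra.
  - apply (quad_bound Ff dF p (Rmin r1 del) kap e).
    + intros s Hs; apply Ff_der, Hn; lra.
    + exact Ff_p.
    + lra.
    + intros s Hs. destruct (Req_dec s p) as [E|E].
      * subst s. rewrite dF_p. replace (p - p) with 0 by ring. rewrite Rabs_R0. 
        replace (0 - kap * 0) with 0 by ring. rewrite Rabs_R0; lra.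
      * assert (Hh : s - p <> 0) by lra.
        assert (Hl : Rabs (s - p) < del) by lra.
        specialize (Hdel (s - p) Hh Hl).
        replace (p + (s - p)) with s in Hdel by ring.
        rewrite dF_p in Hdel.
        replace (dF s - kap * (s - p)) with (((dF s - 0) / (s - p) - kap) * (s - p)) by (field; auto).
        rewrite Rabs_mult. apply Rmult_le_compat_r; [apply Rabs_pos| lra].
Qed.

Lemma mid3 h q M A C : 0 < h -> in_I a b q -> h < Ff q ->
  in_I a b M -> in_I a b A -> in_I a b C -> Ff M = h -> Ff A = h -> Ff C = h ->
  (Gf A - Gf M) * (Gf C - Gf M) < 0 -> False.
Proof.
  intros Hh Hq Hfq HM HA HC FM FA FC Hprod.
  destruct (Hconv M HM) as [n [Hn Hsup]].
  assert (Hdec : forall t, dot (psub (Xpt x y t) (Xpt x y M)) n =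
            (Gf t - Gf M) * dot n Tv + (Ff t - Ff M) * dot n N).
  { intros t. rewrite (dot_decomp Tv N _ n HTu HTN).
    unfold Gf, Ff. rewrite (psub_dot _ _ (Xpt x y p) Tv), (psub_dot _ _ (Xpt x y p) N). ring. }
  assert (Hnn : dot n n = 1).
  { generalize (Hreg M HM); unfold dot; destruct Hn as [E|E]; rewrite E; simpl; intros H; rewrite <- H; ring. }
  assert (Hnn2 : dot n Tv * dot n Tv + dot n N * dot n N = 1).
  { rewrite <- Hnn. rewrite (dot_decomp Tv N n n HTu HTN). ring. }
  pose proof (Hsup A HA) as SA. pose proof (Hsup C HC) as SC.
  pose proof (Hsup p Hp) as SP. pose proof (Hsup q Hq) as SQ.
  rewrite Hdec in SA, SC, SP, SQ. rewrite Ff_p in SP.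
  rewrite FA, FM in SA. rewrite FC, FM in SC. rewrite FM in SP, SQ.
  set (al := dot n Tv) in *. set (be := dot n N) in *.
  assert (Hal : al = 0).
  { replace (h - h) with 0 in SA, SC by ring. rewrite Rmult_0_l, Rplus_0_r in SA, SC.
    assert (H0 : 0 <= ((Gf A - Gf M) * al) * ((Gf C - Gf M) * al)) by (apply Rmult_le_pos; lra).
    replace (((Gf A - Gf M) * al) * ((Gf C - Gf M) * al)) with (((Gf A - Gf M) * (Gf C - Gf M)) * (al * al)) in H0 by ring.
    destruct (Req_dec al 0) as [E|E]; auto. exfalso.
    assert (0 < al * al) by (apply Rsqr_pos_lt; auto). nra. }
  rewrite Hal in SP, SQ, Hnn2.
  assert (be = 0) by nra. subst be. rewrite H in Hnn2. lra.
Qed.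

Lemma distinct_G s t : in_I a b s -> in_I a b t -> s <> t -> Ff s = Ff t -> Gf s <> Gf t.
Proof.
  intros Hs Ht Hne HF HG. apply (Hsimp s t Hs Ht Hne).
  assert (Z : psub (Xpt x y s) (Xpt x y t) = (0,0)).
  { apply (crd_inj Tv N _ HTu HTN).
    - rewrite (psub_dot _ _ (Xpt x y p)). unfold Gf in HG; lra.
    - rewrite (psub_dot _ _ (Xpt x y p)). unfold Ff in HF; lra. }
  unfold psub, Xpt in Z; simpl in Z. injection Z; intros. unfold Xpt; f_equal; lra.
Qed.

Lemma three_pt h q s t w : 0 < h -> in_I a b q -> h < Ff q ->
  in_I a b s -> in_I a b t -> in_I a b w -> s <> t -> t <> w -> s <> w ->
  Ff s = h -> Ff t = h -> Ff w = h -> False.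
Proof.
  intros Hh Hq Hfq Hs Ht Hw n1 n2 n3 Fs Ft Fw.
  assert (G1 : Gf s <> Gf t) by (apply distinct_G; auto; congruence).
  assert (G2 : Gf t <> Gf w) by (apply distinct_G; auto; congruence).
  assert (G3 : Gf s <> Gf w) by (apply distinct_G; auto; congruence).
  destruct (Rlt_le_dec (Gf s) (Gf t)); destruct (Rlt_le_dec (Gf t) (Gf w));
  destruct (Rlt_le_dec (Gf s) (Gf w));
  first [ apply (mid3 h q s t w); auto; nra
        | apply (mid3 h q t s w); auto; nra
        | apply (mid3 h q w s t); auto; nra ].
Qed.


Lemma part1 : exists r del, 0 < r /\ 0 < del /\
  (forall s, Rabs (s - p) < r -> in_I a b s /\ kap * (s - p) ^ 2 / 4 <= Ff s) /\
  forall h, 0 < h < del -> exists s1 s2, p - r < s1 < p /\ p < s2 < p + r /\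
     Ff s1 = h /\ Ff s2 = h /\ forall s, in_I a b s -> Ff s = h -> s = s1 \/ s = s2.
Proof.
  assert (Hk4 : 0 < kap / 4) by (unfold kap; lra).
  destruct (local_quad (kap / 4) Hk4) as [r0 [Hr0 [Hin Hq]]].
  assert (Hb : forall s, Rabs (s - p) < r0 -> in_I a b s /\ kap * (s - p) ^ 2 / 4 <= Ff s).
  { intros s Hs; split; auto. specialize (Hq s Hs). apply Rabs_le_inv in Hq. lra. }
  exists (r0 / 2), (kap * (r0/2) ^ 2 / 4).
  assert (Hkp : 0 < kap) by exact Hk.
  split; [lra|]. split; [apply Rmult_lt_0_compat; [apply Rmult_lt_0_compat; [auto|]; apply pow_lt|]; lra|].
  split.
  { intros s Hs; apply Hb; lra. }
  intros h Hh.
  assert (Hr1 : Rabs ((p + r0/2) - p) < r0) by (rewrite Rabs_pos_eq; lra).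
  assert (Hr2 : Rabs ((p - r0/2) - p) < r0) by (rewrite Rabs_left; lra).
  destruct (Hb _ Hr1) as [Iq Fq]. destruct (Hb _ Hr2) as [Iq2 Fq2].
  replace ((p + r0/2) - p) with (r0/2) in Fq by ring.
  replace ((p - r0/2) - p) with (-(r0/2)) in Fq2 by ring.
  assert (Hcont : forall s, p - r0/2 <= s <= p + r0/2 -> continuity_pt Ff s).
  { intros s Hs. apply Ff_cont. apply Hin. apply Rabs_def1; lra. }
  destruct (Ranalysis5.IVT_interv (fun s => Ff s - h) p (p + r0/2)) as [z2 [Hz2 Ez2]].
  { intros s Hs. apply continuity_pt_minus; [apply Hcont; lra| apply continuity_pt_const; intros ? ?; auto]. }
  { lra. }
  { rewrite Ff_p; lra. }
  { nra. }
  destruct (Ranalysis5.IVT_interv (fun s => h - Ff s) (p - r0/2) p) as [z1 [Hz1 Ez1]].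
  { intros s Hs. apply continuity_pt_minus; [apply continuity_pt_const; intros ? ?; auto|apply Hcont; lra]. }
  { lra. }
  { nra. }
  { rewrite Ff_p; lra. }
  simpl in Ez1, Ez2.
  assert (z1 <> p) by (intro E; subst; rewrite Ff_p in Ez1; lra).
  assert (z2 <> p) by (intro E; subst; rewrite Ff_p in Ez2; lra).
  assert (z2 <> p + r0/2) by (intro E; rewrite E in Ez2; nra).
  assert (z1 <> p - r0/2) by (intro E; rewrite E in Ez1; nra).
  exists z1, z2. split; [lra|]. split; [lra|]. split; [lra|]. split; [lra|].
  intros s Hs Fs.
  destruct (Req_dec s z1); auto. destruct (Req_dec s z2); auto. exfalso.
  apply (three_pt h (p + r0/2) s z1 z2); auto; try lra.
  - apply Hin; apply Rabs_def1; lra.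
  - apply Hin; apply Rabs_def1; lra.
Qed.


Lemma a_lim r (Hr : forall s, Rabs (s - p) < r -> in_I a b s /\ kap * (s - p) ^ 2 / 4 <= Ff s)
  (a1 : R -> R) : at_right 0 (fun h => Rabs (a1 h - p) < r /\ Ff (a1 h) = h) ->
  filterlim a1 (at_right 0) (locally p).
Proof.
  intros Hev. apply filterlim_locally. intros eps.
  assert (Hkp : 0 < kap) by exact Hk.
  pose proof (cond_pos eps) as He.
  assert (Hc : 0 < kap * eps ^ 2 / 4) by (apply Rmult_lt_0_compat; [apply Rmult_lt_0_compat; [auto|apply pow_lt; auto]|lra]).
  generalize (filter_and _ _ Hev (ev_small _ Hc)). apply filter_imp. intros h [[H1 H2] H3].
  change (Rabs (a1 h - p) < eps). destruct (Hr _ H1) as [_ Hb]. rewrite H2 in Hb.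
  assert (Hsq : (a1 h - p) ^ 2 < eps ^ 2) by nra.
  apply Rabs_def1; nra.
Qed.

Lemma Q_lim (a1 : R -> R) : filterlim a1 (at_right 0) (locally p) ->
  at_right 0 (fun h => a1 h <> p /\ Ff (a1 h) = h) ->
  filterlim (fun h => h / (a1 h - p) ^ 2) (at_right 0) (locally (kap / 2)).
Proof.
  intros La Hev. apply filterlim_locally. intros eps.
  pose proof (cond_pos eps) as He.
  destruct (local_quad (eps / 2)) as [r [Hr [_ Hq]]]; [lra|].
  assert (Hb : at_right 0 (fun h => ball p r (a1 h))).
  { apply (La (ball p r)). apply (locally_ball p (mkposreal r Hr)). }
  generalize (filter_and _ _ Hb Hev). apply filter_imp. intros h [Hbh [Hne Hf]].
  change (Rabs (h / (a1 h - p) ^ 2 - kap / 2) < eps).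
  change (Rabs (a1 h - p) < r) in Hbh.
  specialize (Hq _ Hbh). rewrite Hf in Hq.
  assert (Hu : 0 < (a1 h - p) ^ 2) by (rewrite <- Rsqr_pow2; apply Rsqr_pos_lt; lra).
  replace (h / (a1 h - p) ^ 2 - kap / 2) with ((h - kap * (a1 h - p) ^ 2 / 2) * / (a1 h - p) ^ 2)
    by (field; lra).
  rewrite Rabs_mult, (Rabs_pos_eq (/ _)) by (apply Rlt_le, Rinv_0_lt_compat; auto).
  apply Rle_lt_trans with (eps / 2 * (a1 h - p) ^ 2 * / (a1 h - p) ^ 2).
  - apply Rmult_le_compat_r; [apply Rlt_le, Rinv_0_lt_compat; auto| auto].
  - replace (eps / 2 * (a1 h - p) ^ 2 * / (a1 h - p) ^ 2) with (eps / 2) by (field; lra). lra.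
Qed.

Lemma crd_self O T N0 : crd O T N0 O = (0, 0).
Proof. destruct O, T, N0; unfold crd, psub, dot; simpl; f_equal; ring. Qed.

Lemma part2 r (Hr : forall s, Rabs (s - p) < r -> in_I a b s /\ kap * (s - p) ^ 2 / 4 <= Ff s)
  (a1 a2 : R -> R) :
  at_right 0 (fun h => p - r < a1 h < p /\ p < a2 h < p + r /\ Ff (a1 h) = h /\ Ff (a2 h) = h) ->
  filterlim (fun h => T_area x y p (a1 h) (a2 h) / (h * sqrt h)) (at_right 0) (locally (sqrt 2 / sqrt kap)) /\
  filterlim (fun h => U_area x y p (a1 h) (a2 h) / (h * sqrt h)) (at_right 0) (locally (sqrt 2 / (2 * sqrt kap))) /\
  at_right 0 (fun h => det2 (Xd x y (a1 h)) (Xd x y (a2 h)) <> 0).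
Proof.
  intros Hev.
  assert (Hkp : 0 < kap) by exact Hk.
  assert (La1 : filterlim a1 (at_right 0) (locally p)).
  { apply (a_lim r Hr). generalize Hev; apply filter_imp; intros h H; split; [apply Rabs_def1; lra| tauto]. }
  assert (La2 : filterlim a2 (at_right 0) (locally p)).
  { apply (a_lim r Hr). generalize Hev; apply filter_imp; intros h H; split; [apply Rabs_def1; lra| tauto]. }
  assert (LQ1 : filterlim (fun h => h / (a1 h - p) ^ 2) (at_right 0) (locally (kap / 2))).
  { apply Q_lim; auto. generalize Hev; apply filter_imp; intros h H; split; [lra|tauto]. }
  assert (LQ2 : filterlim (fun h => h / (a2 h - p) ^ 2) (at_right 0) (locally (kap / 2))).
  { apply Q_lim; auto. generalize Hev; apply filter_imp; intros h H; split; [lra|tauto]. }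
  assert (Htarget : sqrt 2 / (2 * sqrt kap) = (sqrt 2 / sqrt kap) / 2).
  { assert (0 < sqrt kap) by (apply sqrt_lt_R0; auto). field; lra. }
  assert (HWd : sqrt (/ (kap / 2)) = sqrt 2 / sqrt kap).
  { rewrite <- sqrt_div_alt by auto. f_equal. field; lra. }
  rewrite Htarget.
  remember (sqrt 2 / sqrt kap) as W eqn:EW.
  assert (HW : 0 < W).
  { rewrite EW. apply Rdiv_lt_0_compat; apply sqrt_lt_R0; lra. }
  assert (HW2 : kap = 2 / (W * W)).
  { rewrite EW. assert (0 < sqrt kap) by (apply sqrt_lt_R0; auto).
    assert (0 < sqrt 2) by (apply sqrt_lt_R0; lra).
    replace (sqrt 2 / sqrt kap * (sqrt 2 / sqrt kap)) with ((sqrt 2 * sqrt 2) / (sqrt kap * sqrt kap)) by (field; lra).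
    rewrite !sqrt_sqrt by lra. field; lra. }
  set (w1 := fun h => (a1 h - p) / sqrt h).
  set (w2 := fun h => (a2 h - p) / sqrt h).
  set (g1 := fun h => (Gf (a1 h) - Gf p) / (a1 h - p)).
  set (g2 := fun h => (Gf (a2 h) - Gf p) / (a2 h - p)).
  set (b1 := fun h => (dF (a1 h) - dF p) / (a1 h - p)).
  set (b2 := fun h => (dF (a2 h) - dF p) / (a2 h - p)).
  set (al1 := fun h => dG (a1 h)).
  set (al2 := fun h => dG (a2 h)).
  assert (Ev1 : at_right 0 (fun h => a1 h <> p)).
  { generalize Hev; apply filter_imp; intros h H; lra. }
  assert (Ev2 : at_right 0 (fun h => a2 h <> p)).
  { generalize Hev; apply filter_imp; intros h H; lra. }
  assert (Lw2 : filterlim w2 (at_right 0) (locally W)).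
  { apply filterlim_ext_loc with (fun h => sqrt (/ (h / (a2 h - p) ^ 2))).
    - generalize (filter_and _ _ Hev ev_pos); apply filter_imp; intros h [H Hh].
      unfold w2. transitivity (sqrt (/ ((sqrt h * sqrt h) / (a2 h - p) ^ 2))).
      + rewrite sqrt_sqrt by lra; reflexivity.
      + apply w_eq; [apply sqrt_lt_R0; lra| lra].
    - rewrite <- HWd. apply lim_sqrt; [apply Rinv_0_lt_compat; lra|].
      apply lim_inv; [lra| auto]. }
  assert (Lw1 : filterlim w1 (at_right 0) (locally (- W))).
  { apply filterlim_ext_loc with (fun h => - sqrt (/ (h / (a1 h - p) ^ 2))).
    - generalize (filter_and _ _ Hev ev_pos); apply filter_imp; intros h [H Hh].
      unfold w1. transitivity (- sqrt (/ ((sqrt h * sqrt h) / (a1 h - p) ^ 2))).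
      + rewrite sqrt_sqrt by lra; reflexivity.
      + apply w_eq'; [apply sqrt_lt_R0; lra| lra].
    - apply lim_opp. rewrite <- HWd. apply lim_sqrt; [apply Rinv_0_lt_compat; lra|].
      apply lim_inv; [lra| auto]. }
  assert (Lg1 : filterlim g1 (at_right 0) (locally 1)) by (apply ratio_lim; auto; apply Gf_lim).
  assert (Lg2 : filterlim g2 (at_right 0) (locally 1)) by (apply ratio_lim; auto; apply Gf_lim).
  assert (Lb1 : filterlim b1 (at_right 0) (locally kap)) by (apply ratio_lim; auto; apply dF_lim).
  assert (Lb2 : filterlim b2 (at_right 0) (locally kap)) by (apply ratio_lim; auto; apply dF_lim).
  assert (Lal1 : filterlim al1 (at_right 0) (locally 1)) by (exact (filterlim_comp _ _ _ a1 dG _ _ _ La1 dG_cont)).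
  assert (Lal2 : filterlim al2 (at_right 0) (locally 1)) by (exact (filterlim_comp _ _ _ a2 dG _ _ _ La2 dG_cont)).
  assert (HD : filterlim (fun h => al1 h * b2 h * w2 h - b1 h * w1 h * al2 h) (at_right 0)
             (locally (1 * kap * W - kap * (- W) * 1))) by lim_tac.
  assert (ED : at_right 0 (fun h => al1 h * b2 h * w2 h - b1 h * w1 h * al2 h <> 0)).
  { apply (ev_neq _ _ HD). nra. }
  assert (Eb1 : at_right 0 (fun h => b1 h <> 0)) by (apply (ev_neq _ _ Lb1); lra).
  assert (Eb2 : at_right 0 (fun h => b2 h <> 0)) by (apply (ev_neq _ _ Lb2); lra).
  assert (Good : at_right 0 (fun h => 0 < h /\ p - r < a1 h < p /\ p < a2 h < p + r /\
        Ff (a1 h) = h /\ Ff (a2 h) = h /\ b1 h <> 0 /\ b2 h <> 0 /\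
        al1 h * b2 h * w2 h - b1 h * w1 h * al2 h <> 0)).
  { generalize (filter_and _ _ ev_pos (filter_and _ _ Hev (filter_and _ _ Eb1 (filter_and _ _ Eb2 ED)))).
    apply filter_imp. tauto. }
  assert (Rel : forall h, 0 < h -> a1 h <> p -> a2 h <> p ->
     h = sqrt h * sqrt h /\ 0 < sqrt h /\
     Gf (a1 h) = g1 h * w1 h * sqrt h /\ Gf (a2 h) = g2 h * w2 h * sqrt h /\
     dF (a1 h) = b1 h * w1 h * sqrt h /\ dF (a2 h) = b2 h * w2 h * sqrt h /\
     w1 h <> 0 /\ w2 h <> 0).
  { intros h Hh n1 n2. assert (Hs : 0 < sqrt h) by (apply sqrt_lt_R0; auto).
    assert (n1' : a1 h - p <> 0) by lra. assert (n2' : a2 h - p <> 0) by lra.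
    unfold g1, g2, b1, b2, w1, w2. rewrite Gf_p, dF_p.
    split; [rewrite sqrt_sqrt; lra|]. split; auto.
    split; [field; lra|]. split; [field; lra|]. split; [field; lra|]. split; [field; lra|].
    split; apply Rmult_integral_contrapositive_currified; auto; apply Rinv_neq_0_compat; lra. }
  assert (Det : at_right 0 (fun h => det2 (Xd x y (a1 h)) (Xd x y (a2 h)) <> 0 /\
      det2 Tv (Xd x y (a1 h)) <> 0 /\ det2 Tv (Xd x y (a2 h)) <> 0)).
  { generalize Good; apply filter_imp. intros h (Hh & H1 & H2 & F1 & F2 & B1 & B2 & D).
    destruct (Rel h Hh ltac:(lra) ltac:(lra)) as (E0 & Hs & EG1 & EG2 & EB1 & EB2 & W1 & W2).
    destruct (det_crd Tv N HTu HTN) as [sg [Hsg Hdet]].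
    assert (Hsg0 : sg <> 0) by lra.
    assert (K : forall u v, det2 (crd0 Tv N u) (crd0 Tv N v) <> 0 -> det2 u v <> 0).
    { intros u v Hn E. apply Hn. rewrite Hdet, E. ring. }
    split; [|split]; apply K; unfold crd0, det2; simpl.
    - change (dot (Xd x y (a1 h)) N) with (dF (a1 h)). change (dot (Xd x y (a2 h)) N) with (dF (a2 h)).
      change (dot (Xd x y (a1 h)) Tv) with (al1 h). change (dot (Xd x y (a2 h)) Tv) with (al2 h).
      rewrite EB1, EB2.
      replace (al1 h * (b2 h * w2 h * sqrt h) - b1 h * w1 h * sqrt h * al2 h)
        with ((al1 h * b2 h * w2 h - b1 h * w1 h * al2 h) * sqrt h) by ring.
      apply Rmult_integral_contrapositive_currified; auto; lra.
    - rewrite dotTT, dotTN. change (dot (Xd x y (a1 h)) N) with (dF (a1 h)). rewrite EB1.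
      replace (1 * (b1 h * w1 h * sqrt h) - 0 * dot (Xd x y (a1 h)) Tv) with (b1 h * w1 h * sqrt h) by ring.
      apply Rmult_integral_contrapositive_currified; [apply Rmult_integral_contrapositive_currified; auto|lra].
    - rewrite dotTT, dotTN. change (dot (Xd x y (a2 h)) N) with (dF (a2 h)). rewrite EB2.
      replace (1 * (b2 h * w2 h * sqrt h) - 0 * dot (Xd x y (a2 h)) Tv) with (b2 h * w2 h * sqrt h) by ring.
      apply Rmult_integral_contrapositive_currified; [apply Rmult_integral_contrapositive_currified; auto|lra]. }
  split; [|split].
  -
    apply filterlim_ext_loc with (fun h => Rabs (g2 h * w2 h - g1 h * w1 h) / 2).
    + generalize Good; apply filter_imp. intros h (Hh & H1 & H2 & F1 & F2 & B1 & B2 & D).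
      destruct (Rel h Hh ltac:(lra) ltac:(lra)) as (E0 & Hs & EG1 & EG2 & EB1 & EB2 & W1 & W2).
      unfold T_area. rewrite (tri_area_crd Tv N (Xpt x y p) _ _ _ HTu HTN), crd_self.
      change (crd (Xpt x y p) Tv N (Xpt x y (a1 h))) with (Gf (a1 h), Ff (a1 h)).
      change (crd (Xpt x y p) Tv N (Xpt x y (a2 h))) with (Gf (a2 h), Ff (a2 h)).
      rewrite F1, F2. symmetry. apply (T_alg _ _ h (sqrt h)); auto.
    + replace (W / 2 * 2) with W by field.
      match goal with |- filterlim _ _ (locally ?t) =>
        assert (Ht : Rabs (1 * W - 1 * - W) / 2 = t) end.
      { rewrite Rabs_pos_eq by lra. field. }
      rewrite <- Ht. lim_tac. lra.
  -
    apply filterlim_ext_loc with (fun h =>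
      Rabs ((g2 h * w2 h - al2 h / (b2 h * w2 h)) - (g1 h * w1 h - al1 h / (b1 h * w1 h))) *
      Rabs (1 + (g2 h * w2 h - g1 h * w1 h) * b1 h * b2 h * w1 h * w2 h /
                (al1 h * b2 h * w2 h - b1 h * w1 h * al2 h)) / 2).
    + generalize (filter_and _ _ Good Det); apply filter_imp.
      intros h [(Hh & H1 & H2 & F1 & F2 & B1 & B2 & D) (D1 & D2 & D3)].
      destruct (Rel h Hh ltac:(lra) ltac:(lra)) as (E0 & Hs & EG1 & EG2 & EB1 & EB2 & W1 & W2).
      unfold U_area. fold Tv.
      rewrite (tri_area_crd Tv N (Xpt x y p) _ _ _ HTu HTN).
      rewrite !line_inter_crd by (auto using HTu, HTN).
      rewrite crd_self.
      change (crd (Xpt x y p) Tv N (Xpt x y (a1 h))) with (Gf (a1 h), Ff (a1 h)).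
      change (crd (Xpt x y p) Tv N (Xpt x y (a2 h))) with (Gf (a2 h), Ff (a2 h)).
      change (crd0 Tv N (Xd x y (a1 h))) with (al1 h, dF (a1 h)).
      change (crd0 Tv N (Xd x y (a2 h))) with (al2 h, dF (a2 h)).
      unfold crd0 at 1 2. rewrite dotTT, dotTN.
      rewrite F1, F2. symmetry. apply (U_alg _ _ _ _ h (sqrt h)); auto.
    + match goal with |- filterlim _ _ (locally ?t) => 
        assert (Ht : Rabs ((1 * W - 1 / (kap * W)) - (1 * - W - 1 / (kap * - W))) *
           Rabs (1 + (1 * W - 1 * - W) * kap * kap * - W * W / (1 * kap * W - kap * - W * 1)) / 2 = t) end.
      { replace ((1 * W - 1 / (kap * W)) - (1 * - W - 1 / (kap * - W))) with W
          by (rewrite HW2; field; lra).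
        replace (1 + (1 * W - 1 * - W) * kap * kap * - W * W / (1 * kap * W - kap * - W * 1)) with (-1)
          by (rewrite HW2; field; lra).
        rewrite Rabs_pos_eq by lra. rewrite Rabs_left by lra. field. }
      rewrite <- Ht. lim_tac; try lra; nra.
  - generalize Det; apply filter_imp; tauto.
Qed.

End Curve.

Lemma tri_sym P Q S : tri_area P Q S = tri_area P S Q.
Proof.
  unfold tri_area. f_equal. rewrite <- Rabs_Ropp. f_equal.
  destruct P, Q, S; unfold det2, psub; simpl; ring.
Qed.

Lemma line_inter_sym P u Q v : det2 u v <> 0 -> line_inter P u Q v = line_inter Q v P u.
Proof.
  intros H. destruct P as [p1 p2], u as [u1 u2], Q as [q1 q2], v as [v1 v2].
  unfold line_inter, det2, psub in *; simpl in *.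
  assert (H' : v1 * u2 - v2 * u1 <> 0) by (intro E; apply H; lra).
  f_equal; field; auto.
Qed.

Lemma U_sym x y p s1 s2 : det2 (Xd x y s1) (Xd x y s2) <> 0 ->
  U_area x y p s1 s2 = U_area x y p s2 s1.
Proof.
  intros H. unfold U_area. rewrite (line_inter_sym (Xpt x y s1)) by auto.
  apply tri_sym.
Qed.

Theorem theorem1 (a b : Rbar) (x y : R -> R) (p : R) (N : pt) :
  strictly_convex a b x y ->
  in_I a b p ->
  convex_side_normal a b x y p N ->
  (* for sufficiently small h > 0, the line m meets X in exactly two points *)
  (exists delta : R, 0 < delta /\
     forall h, 0 < h < delta ->
       exists s1 s2, in_I a b s1 /\ in_I a b s2 /\ s1 < s2 /\
         on_m x y p N h s1 /\ on_m x y p N h s2 /\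
         (forall s, in_I a b s -> on_m x y p N h s -> s = s1 \/ s = s2)) /\
  (* for any choice of these two points, the limits hold *)
  (forall s1 s2 : R -> R,
     at_right 0 (fun h => in_I a b (s1 h) /\ in_I a b (s2 h) /\ s1 h <> s2 h /\
                          on_m x y p N h (s1 h) /\ on_m x y p N h (s2 h)) ->
     filterlim (fun h => T_area x y p (s1 h) (s2 h) / (h * sqrt h)) (at_right 0)
       (locally (sqrt 2 / sqrt (dot (Xdd x y p) N))) /\
     filterlim (fun h => U_area x y p (s1 h) (s2 h) / (h * sqrt h)) (at_right 0)
       (locally (sqrt 2 / (2 * sqrt (dot (Xdd x y p) N))))).
Proof.
  intros [Hab [Hreg [[Cx _] [[Cy _] [Hsimp [Hconv Hcurv]]]]]] Hp HN.
  assert (Hdx : forall s, in_I a b s -> ex_derive x s).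
  { intros s Hs. exact (Cx 1%nat s ltac:(auto) Hs). }
  assert (Hdy : forall s, in_I a b s -> ex_derive y s).
  { intros s Hs. exact (Cy 1%nat s ltac:(auto) Hs). }
  assert (Hx2 : ex_derive (Derive x) p) by exact (Cx 2%nat p ltac:(auto) Hp).
  assert (Hy2 : ex_derive (Derive y) p) by exact (Cy 2%nat p ltac:(auto) Hp).
  assert (Hk : 0 < dot (Xdd x y p) N) by (apply Hcurv; auto).
  destruct (part1 a b x y p N Hdx Hdy Hreg Hsimp Hconv Hp HN Hx2 Hy2 Hk)
    as [r [del [Hr [Hdel [Hb Hex]]]]].
  split.
  - exists del. split; auto. intros h Hh.
    destruct (Hex h Hh) as [s1 [s2 [H1 [H2 [F1 [F2 U]]]]]].
    exists s1, s2. split; [apply Hb; apply Rabs_def1; lra|].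
    split; [apply Hb; apply Rabs_def1; lra|]. split; [lra|].
    split; [exact F1|]. split; [exact F2|]. exact U.
  - intros s1 s2 Hev.
    set (a1 := fun h => Rmin (s1 h) (s2 h)).
    set (a2 := fun h => Rmax (s1 h) (s2 h)).
    assert (Good : at_right 0 (fun h => 0 < h < del /\ in_I a b (s1 h) /\ in_I a b (s2 h) /\ s1 h <> s2 h /\
                          Ff x y p N (s1 h) = h /\ Ff x y p N (s2 h) = h)).
    { generalize (filter_and _ _ ev_pos (filter_and _ _ (ev_small del Hdel) Hev)).
      apply filter_imp. intros h (H1 & H2 & H3). split; [lra|]. exact H3. }
    assert (Ev : at_right 0 (fun h => p - r < a1 h < p /\ p < a2 h < p + r /\
                    Ff x y p N (a1 h) = h /\ Ff x y p N (a2 h) = h)).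
    { generalize Good; apply filter_imp. intros h (Hh & I1 & I2 & Hne & F1 & F2).
      destruct (Hex h Hh) as [z1 [z2 [Z1 [Z2 [FZ1 [FZ2 U]]]]]].
      unfold a1, a2, Rmin, Rmax.
      destruct (U _ I1 F1) as [E1|E1]; destruct (U _ I2 F2) as [E2|E2];
        rewrite E1, E2 in *; try (exfalso; congruence);
        destruct (Rle_dec _ _); try lra; repeat split; auto; lra. }
    destruct (part2 a b x y p N Hdx Hdy Hreg Hp HN Hx2 Hy2 Hk r Hb a1 a2 Ev) as [LT [LU LD]].
    assert (Eq : at_right 0 (fun h => T_area x y p (a1 h) (a2 h) = T_area x y p (s1 h) (s2 h) /\
                                       U_area x y p (a1 h) (a2 h) = U_area x y p (s1 h) (s2 h))).
    { generalize LD; apply filter_imp. intros h D. unfold a1, a2, Rmin, Rmax in *.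
      destruct (Rle_dec (s1 h) (s2 h)); [split; reflexivity|].
      split.
      - unfold T_area. apply tri_sym.
      - apply U_sym. auto. }
    split.
    + eapply filterlim_ext_loc; [|exact LT].
      generalize Eq; apply filter_imp. intros h [E _]. rewrite E. reflexivity.
    + eapply filterlim_ext_loc; [|exact LU].
      generalize Eq; apply filter_imp. intros h [_ E]. rewrite E. reflexivity.
Qed.
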